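(* Let $X,Y$ be real-valued random variables on a probability space, let $\mu$ be the law of $(X,Y)$ on $\mathbb{R}^2$, $\mu_X,\mu_Y$ the laws of $X,Y$, and $\mu_{XY}=\mu_X\times\mu_Y$. If $\mu\ll\mu_{XY}$ and $L=\frac{d\mu}{d\mu_{XY}}$ is a version of the Radon–Nikodym derivative, then \[\mu_{XY}(\{(x,y)\in\mathbb{R}^2: L(x,y)>1\})<1\quad\text{and}\quad \mu_{XY}(\{(x,y)\in\mathbb{R}^2: L(x,y)<1\})<1.\]
   Context: $\mu_{XY}$ is the unique probability measure on the Borel sets of $\mathbb{R}^2$ with $\mu_{XY}(A\times B)=\mu_X(A)\mu_Y(B)$. *)

(* Defs.v *)
From HB Require Import structures.
From mathcomp Require Import all_boot all_order all_algebra.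
From mathcomp Require Import all_classical all_reals all_analysis.
From mathcomp Require Import measurable_realfun.
Set Implicit Arguments. Unset Strict Implicit. Unset Printing Implicit Defensive.
Import Order.TTheory GRing.Theory Num.Theory.
Local Open Scope classical_set_scope.
Local Open Scope ring_scope.

(* Law of the random vector (X,Y) on R^2 = R * R (product sigma-algebra,
   which is the Borel sigma-algebra of R^2): the pushforward of P by t |-> (X t, Y t). *)
Definition joint_law d (T : measurableType d) (R : realType) (P : probability T R)
  (X Y : T -> R) : set (R * R) -> \bar R :=
  fun A => P ((fun t => (X t, Y t)) @^-1` A).

(* Main.v *)
Require Import Defs.
From HB Require Import structures.
From mathcomp Require Import all_boot all_order all_algebra.
From mathcomp Require Import all_classical all_reals all_analysis.
From mathcomp Require Import measurable_realfun.
From mathcomp Require Import lra.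
Import Order.TTheory GRing.Theory Num.Theory.
Local Open Scope classical_set_scope.
Local Open Scope ring_scope.
Local Open Scope ereal_scope.

Lemma fin01 (R : realType) (x : \bar R) : 0 <= x -> x <= 1 -> x = (fine x)%:E.
Proof.
move=> h0 h1; rewrite fineK // ge0_fin_numE //; exact: (le_lt_trans h1 (ltry _)).
Qed.

Lemma aux01 (R : realType) (x : \bar R) : 0 <= x -> 1 + x = 1 -> x = 0.
Proof.
case: x => [r||] //= _.
by move/eqP; rewrite -EFinD eqe => /eqP h; congr EFin; lra.
Qed.

Section core.
Context d (T : measurableType d) (R : realType) (mu : {measure set T -> \bar R})
  (L : T -> \bar R) (mL : measurable_fun setT L) (mu1 : mu setT = 1).

Lemma mLs A : measurable_fun A L.
Proof. exact: measurable_funS measurableT (@subsetT _ A) mL. Qed.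

Lemma meas_lt (f g : T -> \bar R) : measurable_fun setT f -> measurable_fun setT g ->
  measurable [set x | f x < g x].
Proof. by move=> mf mg; have := measurable_lte measurableT mf mg; rewrite setTI. Qed.

Lemma finmu A : measurable A -> mu A = (fine (mu A))%:E.
Proof. by move=> mA; apply: fin01 => //; rewrite -mu1 le_measure // inE. Qed.

Lemma pos_piece (F : nat -> set T) D : measurable D -> (forall n, measurable (F n)) ->
  D `<=` \bigcup_n F n -> mu D != 0 -> exists n, 0 < mu (F n).
Proof.
move=> mD mF DF muD; apply: contrapT => /forallNP H.
have F0 n : mu (F n) = 0.
  by apply/eqP; rewrite eq_le measure_ge0 andbT leNgt; apply/negP => h; exact: (H n h).
move: muD; apply/negP; rewrite negbK eq_le measure_ge0 andbT.
apply: le_trans (measure_sigma_subadditive mu mF mD DF) _.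
by rewrite eseries0.
Qed.

Lemma core1 (m : \bar R) : m = \int[mu]_(z in [set z | 1%:E < L z]) L z -> m <= 1 ->
  mu [set z | 1%:E < L z] < 1.
Proof.
set D := [set z | 1%:E < L z] => hm m1.
have mD : measurable D by apply: meas_lt.
rewrite ltNge; apply/negP => hD.
have [n An] : exists n, 0 < mu [set z | (1 + n.+1%:R^-1)%:E < L z].
  apply: (@pos_piece (fun n => [set z | (1 + n.+1%:R^-1)%:E < L z]) _ mD).
  - by move=> n; apply: meas_lt.
  - move=> z; rewrite /D /=; case E: (L z) => [r||] //=.
    + rewrite lte_fin => r1; have [k hk] := ltr_add_invr r1.
      by exists k => //=; rewrite E lte_fin.
    + by move=> _; exists 0%N => //=; rewrite E; exact: ltry.
  - by rewrite gt_eqF // (lt_le_trans lte01 hD).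
set A := [set z | _] in An; set e : R := (n.+1%:R^-1)%R.
have e0 : (0 < e)%R by rewrite invr_gt0 ltr0n.
have mA : measurable A by apply: meas_lt.
have AD : A `<=` D.
  move=> z; rewrite /A /D /=; apply: lt_trans; rewrite lte_fin ltrDl //.
have DE : D = A `|` (D `\` A) by rewrite setDUK.
have dis : [disjoint A & (D `\` A)] by rewrite /disj_set setDIK.
have mDA : measurable (D `\` A) by apply: measurableD.
have h1 : ((1 + e)%:E * mu A + mu (D `\` A)) <= m.
  rewrite hm [in X in _ <= X]DE ge0_integral_setU //; last 2 first.
  - exact: mLs.
  - by rewrite -DE => z /ltW; apply: le_trans; rewrite lee_fin.
  apply: leeD.
  - rewrite -integral_cst //; apply: ge0_le_integral => //.
    + by move=> z _; rewrite lee_fin; apply: addr_ge0 => //; exact: ltW.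
    + exact: mLs.
    + by move=> z /ltW.
  - rewrite -[mu (D `\` A)]mul1e -integral_cst //; apply: ge0_le_integral => //.
    + exact: mLs.
    + by move=> z [/ltW].
have h2 : mu D = mu A + mu (D `\` A) by rewrite {1}DE measureU // setDIK.
move: h1 h2 hD m1 An; rewrite (finmu _ mA) (finmu _ mDA) (finmu _ mD).
set a := fine (mu A); set b := fine (mu (D `\` A)); set c := fine (mu D).
move=> h1 [] -> hD m1; rewrite lte_fin => a0.
have := le_trans h1 m1; rewrite -EFinM -EFinD lee_fin => h.
move: hD; rewrite lee_fin => hD.
have ea : (0 < e * a)%R by apply: mulr_gt0.
move: h; rewrite mulrDl mul1r; lra.
Qed.

Lemma core2 : (mu [set z | L z < 1%:E] = 1 -> \int[mu]_(z in [set z | L z < 1%:E]) L z = 1) ->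
  mu [set z | L z < 1%:E] < 1.
Proof.
set D := [set z | L z < 1%:E] => H.
have mD : measurable D by apply: meas_lt.
rewrite ltNge; apply/negP => hD.
have muD1 : mu D = 1 by apply/eqP; rewrite eq_le hD andbT -mu1 le_measure // inE.
have hI := H muD1.
have [n Bn] : exists n, 0 < mu [set z | L z < (1 - n.+1%:R^-1)%:E].
  apply: (@pos_piece (fun n => [set z | L z < (1 - n.+1%:R^-1)%:E]) _ mD).
  - by move=> n; apply: meas_lt.
  - move=> z; rewrite /D /=; case E: (L z) => [r||] //=.
    + rewrite lte_fin => r1; have [k hk] := ltr_add_invr r1.
      exists k => //=; by rewrite E lte_fin; move: hk; set t := (k.+1%:R^-1)%R; lra.
    + by move=> _; exists 0%N => //=; rewrite E; exact: ltNyr.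
  - by rewrite muD1 oner_neq0.
set B := [set z | _] in Bn; set e : R := (n.+1%:R^-1)%R.
have e0 : (0 < e)%R by rewrite invr_gt0 ltr0n.
have e1 : (e <= 1)%R by rewrite invf_le1 ?ltr0n // ler1n.
have mB : measurable B by apply: meas_lt.
have BD : B `<=` D.
  by move=> z; rewrite /B /D /= => h; apply: (lt_le_trans h); rewrite lee_fin gerBl invr_ge0.
have DE : D = B `|` (D `\` B) by rewrite (setDUK BD).
have mDB : measurable (D `\` B) by apply: measurableD.
have h1 : 1 <= ((1 - e)%:E * mu B + mu (D `\` B)).
  rewrite -hI integralE.
  apply: (@le_trans _ _ (\int[mu]_(x in D) L^\+ x)).
    by rewrite -[X in _ <= X]sube0; apply: leeB => //; apply: integral_ge0 => z _; exact: funeneg_ge0.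
  rewrite [in X in X <= _]DE ge0_integral_setU //;
    [| by apply: measurable_funepos; exact: mLs | by rewrite /disj_set setDIK].
  apply: leeD.
  - rewrite -integral_cst //; apply: ge0_le_integral => //.
    + by apply: measurable_funepos; exact: mLs.
    + by move=> z Bz; rewrite funeposE ge_max; apply/andP; split;
        [exact: ltW | rewrite lee_fin; lra].
  - rewrite -[mu (D `\` B)]mul1e -integral_cst //; apply: ge0_le_integral => //.
    + by apply: measurable_funepos; exact: mLs.
    + by move=> z [Dz _]; rewrite funeposE ge_max; apply/andP; split;
        [exact: ltW | rewrite lee_fin].
have h2 : mu D = mu B + mu (D `\` B) by rewrite {1}DE measureU // setDIK.
move: h1 h2 Bn; rewrite muD1 (finmu _ mB) (finmu _ mDB).
set a := fine (mu B); set b := fine (mu (D `\` B)).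
rewrite -EFinM -EFinD lee_fin => h1 /eqP; rewrite -EFinD eqe => /eqP h2.
rewrite lte_fin => a0.
have ea : (0 < e * a)%R by apply: mulr_gt0.
move: h1; rewrite mulrBl mul1r; lra.
Qed.
End core.

Local Close Scope ereal_scope.
Theorem proposition3 (d : measure_display) (T : measurableType d) (R : realType)
  (P : probability T R) (X Y : {RV P >-> R}) (L : R * R -> \bar R) :
  joint_law P X Y `<< (distribution P X \x distribution P Y)%E ->
  measurable_fun [set: (R * R)%type] L ->
  (forall A : set (R * R), measurable A ->
     joint_law P X Y A = (\int[(distribution P X \x distribution P Y)%E]_(z in A) L z)%E) ->
  ((distribution P X \x distribution P Y) [set z | 1%:E < L z] < 1%:E)%E /\
  ((distribution P X \x distribution P Y) [set z | L z < 1%:E] < 1%:E)%E.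
Proof.
move=> _ mL HL.
set nu := (distribution P X \x distribution P Y)%E.
have nu1 : nu setT = 1%E.
  by rewrite /nu -setXTT product_measure1E // /= /distribution /pushforward /= !preimage_setT !probability_setT mule1.
have mXY : measurable_fun setT (fun t => (X t, Y t)) :=
  measurable_fun_pair (measurable_funPT X) (measurable_funPT Y).
have mpre A : measurable A -> measurable ((fun t => (X t, Y t)) @^-1` A).
  by move=> mA; rewrite -[_ @^-1` _]setTI; exact: mXY.
split.
- have mD : measurable [set z | (1%:E < L z)%E] by apply: meas_lt.
  apply: (@core1 _ _ _ nu L mL nu1 _ (HL _ mD)).
  by rewrite /joint_law probability_le1 //; exact: mpre.
- apply: (@core2 _ _ _ nu L mL nu1) => muD1.
  set D := [set z | (L z < 1%:E)%E] in muD1 *.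
  have mD : measurable D by apply: meas_lt.
  have mC : measurable (~` D) by apply: measurableC.
  rewrite -HL //.
  have nuC : nu (~` D) = 0%E.
    have := measureU nu mD mC (setICr D); rewrite setUv => h0; have h : (1 + nu (~` D) = 1)%E. rewrite -{1}muD1 -h0; exact nu1.
    by apply: aux01 => //; exact: measure_ge0.
  have JC : joint_law P X Y (~` D) = 0%E.
    rewrite HL // (@negligible_integral _ _ _ nu (~` D) (~` D) L) //.
      by rewrite setDv integral_set0.
    by apply: null_set_integrable => //; exact: mLs.
  move: JC; rewrite /joint_law -preimage_setC (probability_setC P (mpre _ mD)) => /eqP.
  rewrite (@fin01 _ _ (measure_ge0 P _) (probability_le1 P (mpre _ mD))).
  by rewrite -EFinB eqe subr_eq0 => /eqP <-.
Qed.
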